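(* For $i=1,\dots,d$ let $K_i(z,z')=f_i(z)f_i(z')g_i(zz')$ be an interpretable Taylor kernel on a connected domain $\mathcal{X}_i\subseteq\mathbb{R}$, and let $K(x,y)=\prod_{i=1}^d K_i(x_i,y_i)$ on $\mathcal{X}=\mathcal{X}_1\times\dots\times\mathcal{X}_d$. Fix an integer $M\ge 0$ and let $\phi_{i,j}(z)=z^j f_i(z)\sqrt{g_i^{(j)}(0)/j!}$ for $i\in[d]$, $0\le j\le M$ (the surrogate features of order $M$). Then threshold cuts on surrogate features yield interpretable splits: for every finite set $S\subset\mathcal{X}$, every $i\in[d]$, $0\le j\le M$ and $\theta\in\mathbb{R}$, the partition of $S$ into $\{x\in S:\phi_{i,j}(x_i)\le\theta\}$ and $\{x\in S:\phi_{i,j}(x_i)>\theta\}$ is of the form $\{x\in S: x_i\in[\theta_1,\theta_2]\}$ and $\{x\in S:x_i\notin[\theta_1,\theta_2]\}$ for some real $\theta_1<\theta_2$ (in some order of the two parts). Consequently, any decision tree on a finite dataset in $\mathcal{X}$ whose internal nodes split the data by threshold cuts $\phi_{i,j}(x_i)\le\theta$ versus $\phi_{i,j}(x_i)>\theta$ is an interpretable decision tree.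
   Context: An interpretable Taylor kernel is a bounded kernel $K_i$ on a connected domain $\mathcal{X}_i\subseteq\mathbb{R}$ of the form $K_i(z,z')=f(z)f(z')g(zz')$ with $f$ differentiable and $g$ analytic, such that $g^{(j)}(0)\ge 0$ for all $j\in\mathbb{N}$ ($g^{(j)}$ the $j$-th derivative) and such that for every $j\in\mathbb{N}$ the equation $z^{j-1}(zf'(z)+jf(z))=0$ has at most one solution $z\in\mathcal{X}_i$. An interpretable decision tree on a dataset $X\subset\mathbb{R}^d$ is a binary tree partitioning $X$ in which at every internal node $u$, receiving data $X^u$, there exist $i\in[d]$ and real $\theta_1<\theta_2$ such that $X^u$ is split into $\{x\in X^u:x_i\in[\theta_1,\theta_2]\}$ and $\{x\in X^u:x_i\notin[\theta_1,\theta_2]\}$. *)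

(* Defs.v *)
From HB Require Import structures.
From mathcomp Require Import all_boot all_order all_algebra.
From mathcomp Require Import all_classical all_reals all_analysis.
Set Implicit Arguments. Unset Strict Implicit. Unset Printing Implicit Defensive.
Import Order.TTheory GRing.Theory Num.Theory numFieldNormedType.Exports.
Local Open Scope classical_set_scope.
Local Open Scope ring_scope.

Section Defs.
Variable R : realType.

Definition analytic_on (D : set R) (g : R -> R) : Prop :=
  forall x, D x -> exists r : R, 0 < r /\ exists a : nat -> R,
    forall y, `|y - x| < r ->
      (fun n : nat => \sum_(k < n) a k * (y - x) ^+ k) @ \oo --> g y.

Definition psd_kernel_on (X : set R) (K : R -> R -> R) : Prop :=
  forall (n : nat) (z : 'I_n -> R) (c : 'I_n -> R), (forall k, X (z k)) ->
    0 <= \sum_(k < n) \sum_(l < n) c k * c l * K (z k) (z l).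

(* the expression z^{j-1} (z f'(z) + j f(z)) (= d/dz (z^j f(z)));
   for j = 0 it is z^{-1}(z f'(z)) = f'(z) *)
Definition taylor_crit (f : R -> R) (j : nat) (z : R) : R :=
  if j == 0%N then derive1 f z
  else z ^+ j.-1 * (z * derive1 f z + j%:R * f z).

Definition interpretable_taylor_kernel (X : set R) (f g : R -> R) : Prop :=
  connected X /\
      psd_kernel_on X (fun z z' => f z * f z' * g (z * z')) /\
      (exists B : R, forall z z', X z -> X z' -> `|f z * f z' * g (z * z')| <= B) /\
      (forall z, X z -> derivable f z 1) /\
      (exists D : set R, [/\ open D, D 0,
          (forall z z', X z -> X z' -> D (z * z')) & analytic_on D g]) /\
      (forall j : nat, 0 <= derive1n j g 0) /\
      (forall (j : nat) (z1 z2 : R), X z1 -> X z2 ->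
          taylor_crit f j z1 = 0 -> taylor_crit f j z2 = 0 -> z1 = z2).

Definition surrogate_feature (f g : R -> R) (j : nat) (z : R) : R :=
  z ^+ j * f z * Num.sqrt (derive1n j g 0 / (j`!)%:R).

Variable d : nat.

Definition interpretable_split (S : set ('I_d -> R)) (P : ('I_d -> R) -> Prop) :=
  exists (i : 'I_d) (t1 t2 : R), t1 < t2 /\
   (([set x | S x /\ P x] = [set x | S x /\ t1 <= x i <= t2] /\
     [set x | S x /\ ~ P x] = [set x | S x /\ ~ (t1 <= x i <= t2)]) \/
    ([set x | S x /\ ~ P x] = [set x | S x /\ t1 <= x i <= t2] /\
     [set x | S x /\ P x] = [set x | S x /\ ~ (t1 <= x i <= t2)])).

Inductive split_tree : Type :=
  | SLeaf : split_tree
  | SNode : (('I_d -> R) -> Prop) -> split_tree -> split_tree -> split_tree.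

Fixpoint interpretable_tree (T : split_tree) (S : set ('I_d -> R)) : Prop :=
  match T with
  | SLeaf => True
  | SNode P l r => [/\ interpretable_split S P,
                       interpretable_tree l [set x | S x /\ P x] &
                       interpretable_tree r [set x | S x /\ ~ P x]]
  end.

Inductive cut_tree : Type :=
  | CLeaf : cut_tree
  | CNode : 'I_d -> nat -> R -> cut_tree -> cut_tree -> cut_tree.

Fixpoint cut_tree_orders_le (M : nat) (T : cut_tree) : Prop :=
  match T with
  | CLeaf => True
  | CNode _ j _ l r => (j <= M)%N /\ cut_tree_orders_le M l /\ cut_tree_orders_le M r
  end.

Fixpoint cut_tree_to_split_tree (f g : 'I_d -> R -> R) (T : cut_tree) : split_tree :=
  match T with
  | CLeaf => SLeaf
  | CNode i j th l r =>
      SNode (fun x => surrogate_feature (f i) (g i) j (x i) <= th)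
            (cut_tree_to_split_tree f g l) (cut_tree_to_split_tree f g r)
  end.

End Defs.

(* Main.v *)
Require Import Defs.
From HB Require Import structures.
From mathcomp Require Import all_boot all_order all_algebra.
From mathcomp Require Import all_classical all_reals all_analysis.
From mathcomp Require Import ring lra.
Import Order.TTheory GRing.Theory Num.Theory numFieldNormedType.Exports.
Local Open Scope classical_set_scope.
Local Open Scope ring_scope.

Lemma crit (R : realType) (f : R -> R) (j : nat) (p : R) :
  derivable f p 1 -> is_derive p 1 (fun z => z ^+ j * f z) 0 ->
  taylor_crit f j p = 0.
Proof.
move=> df hd.
have E : (fun z => z ^+ j * f z) = ((@id R) ^+ j) * f.
  by apply/funext => z /=; rewrite exprfctE.
rewrite E in hd.
have did : derivable (@id R) p 1 by exact: derivable_id.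
have := @derive_val _ _ _ _ _ _ _ hd.
rewrite deriveM //.
rewrite deriveX // derive_id /= exprfctE /= => H.
rewrite /taylor_crit derive1E.
clear E hd; case: j H => [|j] /=; rewrite ?expr0 ?mul0r ?scale0r ?addr0 ?mul1r.
  by rewrite scale1r scaler0 addr0.
rewrite /GRing.scale /= mulr1 => H; rewrite -[RHS]H exprS; ring.
Qed.

Lemma max_in (R : realType) (X : set R) (h : R -> R) (a b c : R) :
  is_interval X -> (forall z, X z -> derivable h z 1) -> X a -> X c ->
  a < b -> b < c -> h a < h b -> h c < h b ->
  exists2 m, X m & is_derive m 1 h 0 /\ h b <= h m.
Proof.
move=> iX dh Xa Xc ab bc hab hcb.
have sub : forall t, t \in `[a, c] -> X t.
  move=> t; rewrite in_itv /= => /andP[t1 t2]; apply: (iX a c) => //.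
  by rewrite t1 t2.
have cont : {within `[a, c], continuous h}.
  by apply: derivable_within_continuous => t /sub; exact: dh.
have [m mac mmax] := EVT_max (ltW (lt_trans ab bc)) cont.
have bin : b \in `[a, c] by rewrite in_itv /= (ltW ab) (ltW bc).
have hbm := mmax b bin.
exists m; first exact: sub.
split=> //.
have mo : m \in `]a, c[.
  move: mac; rewrite !in_itv /= => /andP[m1 m2].
  have ma : a != m by apply/eqP => E; subst m; move: hbm hab; lra.
  have mc : m != c by apply/eqP => E; subst m; move: hbm hcb; lra.
  by rewrite !lt_neqAle m1 m2 ma mc.
apply: (derive1_at_max (ltW (lt_trans ab bc))) => //.
  by move=> t /subset_itv_oo_cc /sub; exact: dh.
by move=> t /subset_itv_oo_cc; exact: mmax.
Qed.

Lemma min_in (R : realType) (X : set R) (h : R -> R) (a b c : R) :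
  is_interval X -> (forall z, X z -> derivable h z 1) -> X a -> X c ->
  a < b -> b < c -> h b < h a -> h b < h c ->
  exists2 m, X m & is_derive m 1 h 0 /\ h m <= h b.
Proof.
move=> iX dh Xa Xc ab bc hab hcb.
have sub : forall t, t \in `[a, c] -> X t.
  move=> t; rewrite in_itv /= => /andP[t1 t2]; apply: (iX a c) => //.
  by rewrite t1 t2.
have cont : {within `[a, c], continuous h}.
  by apply: derivable_within_continuous => t /sub; exact: dh.
have [m mac mmax] := EVT_min (ltW (lt_trans ab bc)) cont.
have bin : b \in `[a, c] by rewrite in_itv /= (ltW ab) (ltW bc).
have hbm := mmax b bin.
exists m; first exact: sub.
split=> //.
have mo : m \in `]a, c[.
  move: mac; rewrite !in_itv /= => /andP[m1 m2].
  have ma : a != m by apply/eqP => E; subst m; move: hbm hab; lra.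
  have mc : m != c by apply/eqP => E; subst m; move: hbm hcb; lra.
  by rewrite !lt_neqAle m1 m2 ma mc.
apply: (derive1_at_min (ltW (lt_trans ab bc))) => //.
  by move=> t /subset_itv_oo_cc /sub; exact: dh.
by move=> t /subset_itv_oo_cc; exact: mmax.
Qed.

Lemma seq_above (R : realType) (s : seq R) : exists t, forall v, v \in s -> v < t.
Proof.
elim: s => [|b s [t Ht]]; first by exists 0.
case: (lerP t b) => tb.
  exists (b + 1) => v; rewrite inE => /orP[/eqP ->|/Ht]; lra.
exists t => v; rewrite inE => /orP[/eqP ->|/Ht] //.
Qed.

Lemma seq_gap (R : realType) (s : seq R) (a : R) :
  exists2 e, 0 < e & forall v, v \in s -> ~ (a < v <= a + e).
Proof.
elim: s => [|b s [e e0 He]]; first by exists 1.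
case: (lerP b a) => ba.
  exists e => // v; rewrite inE => /orP[/eqP ->|/He //]; lra.
case: (lerP e ((b - a) / 2)) => eb.
  exists e => // v; rewrite inE => /orP[/eqP ->|/He //]; lra.
exists ((b - a) / 2); first lra.
move=> v; rewrite inE => /orP[/eqP ->|/He H]; lra.
Qed.

Lemma seq_minQ (R : realType) (s : seq R) (Q : R -> Prop) :
  (exists v, v \in s /\ Q v) ->
  exists lo, [/\ lo \in s, Q lo & forall v, v \in s -> Q v -> lo <= v].
Proof.
elim: s => [[v []]|b s IH] //.
move=> H.
have [[w [ws Qw]]|nex] := pselect (exists v, v \in s /\ Q v).
  have [lo [los Qlo Hlo]] := IH (ex_intro _ w (conj ws Qw)).
  have [Qb|nQb] := pselect (Q b).
    case: (lerP b lo) => blo.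
      exists b; split => //; first by rewrite inE eqxx.
      move=> v; rewrite inE => /orP[/eqP ->|vs Qv]; first lra.
      have := Hlo v vs Qv; lra.
    exists lo; split => //; first by rewrite inE los orbT.
    move=> v; rewrite inE => /orP[/eqP ->|vs Qv]; first lra.
    exact: Hlo.
  exists lo; split => //; first by rewrite inE los orbT.
  move=> v; rewrite inE => /orP[/eqP ->|vs Qv]; last exact: Hlo.
  by move=> /nQb.
have [Qb|nQb] := pselect (Q b).
  exists b; split => //; first by rewrite inE eqxx.
  move=> v; rewrite inE => /orP[/eqP ->|vs Qv]; first lra.
  by exfalso; apply: nex; exists v.
exfalso; move: H => [v]; rewrite inE => -[/orP[/eqP E|vs] Qv].
  by apply: nQb; rewrite -E.
by apply: nex; exists v.
Qed.

Lemma seq_maxQ (R : realType) (s : seq R) (Q : R -> Prop) :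
  (exists v, v \in s /\ Q v) ->
  exists lo, [/\ lo \in s, Q lo & forall v, v \in s -> Q v -> v <= lo].
Proof.
elim: s => [[v []]|b s IH] //.
move=> H.
have [[w [ws Qw]]|nex] := pselect (exists v, v \in s /\ Q v).
  have [lo [los Qlo Hlo]] := IH (ex_intro _ w (conj ws Qw)).
  have [Qb|nQb] := pselect (Q b).
    case: (lerP lo b) => blo.
      exists b; split => //; first by rewrite inE eqxx.
      move=> v; rewrite inE => /orP[/eqP ->|vs Qv]; first lra.
      have := Hlo v vs Qv; lra.
    exists lo; split => //; first by rewrite inE los orbT.
    move=> v; rewrite inE => /orP[/eqP ->|vs Qv]; first lra.
    exact: Hlo.
  exists lo; split => //; first by rewrite inE los orbT.
  move=> v; rewrite inE => /orP[/eqP ->|vs Qv]; last exact: Hlo.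
  by move=> /nQb.
have [Qb|nQb] := pselect (Q b).
  exists b; split => //; first by rewrite inE eqxx.
  move=> v; rewrite inE => /orP[/eqP ->|vs Qv]; first lra.
  by exfalso; apply: nex; exists v.
exfalso; move: H => [v]; rewrite inE => -[/orP[/eqP E|vs] Qv].
  by apply: nQb; rewrite -E.
by apply: nex; exists v.
Qed.

Lemma fit (R : realType) (s : seq R) (Q : R -> Prop) :
  (forall a b c, a \in s -> b \in s -> c \in s -> a <= b -> b <= c ->
     Q a -> Q c -> Q b) ->
  exists t1 t2, t1 < t2 /\ forall v, v \in s -> (Q v <-> t1 <= v <= t2).
Proof.
move=> cvx.
have [ex|nex] := pselect (exists v, v \in s /\ Q v).
  have [lo [los Qlo Hlo]] := @seq_minQ _ _ _ ex.
  have [hi [his Qhi Hhi]] := @seq_maxQ _ _ _ ex.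
  have [e e0 He] := @seq_gap _ s hi.
  have lohi := Hhi _ los Qlo.
  exists lo, (hi + e); split; first lra.
  move=> v vs; split.
    move=> Qv; have := Hlo _ vs Qv; have := Hhi _ vs Qv; move=> *.
    apply/andP; split; lra.
  move=> /andP[v1 v2].
  case: (lerP v hi) => vhi; first exact: (cvx lo v hi).
  by exfalso; apply: (He v vs); apply/andP; split.
have [t Ht] := @seq_above _ s.
exists t, (t + 1); split; first lra.
move=> v vs; split.
  by move=> Qv; exfalso; apply: nex; exists v.
move=> /andP[v1 v2]; have := Ht v vs; lra.
Qed.

Definition cvx (R : realType) (Y : set R) (Q : R -> Prop) :=
  forall a b c, Y a -> Y b -> Y c -> a <= b -> b <= c -> Q a -> Q c -> Q b.
Arguments cvx {R}.

Lemma split_from_convex (R : realType) (d : nat) (S : set ('I_d -> R)) (i : 'I_d)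
  (Y : set R) (Q : R -> Prop) :
  finite_set S -> (forall x, S x -> Y (x i)) ->
  cvx Y Q \/ cvx Y (fun z => ~ Q z) ->
  interpretable_split S (fun x => Q (x i)).
Proof.
move=> fS SY hc.
have fV : finite_set ((fun x => x i) @` S) by exact: finite_image.
have [s Vs] := (finite_seqP _).1 fV.
have ins : forall x, S x -> x i \in s.
  move=> x Sx; have : ((fun x => x i) @` S) (x i) by exists x.
  by rewrite Vs.
have Ys : forall v, v \in s -> Y v.
  move=> v; have : ((fun x => x i) @` S) v <-> [set` s] v by rewrite Vs.
  by move=> [_ H] /H [x Sx <-]; exact: SY.
case: hc => hc.
  have [t1 [t2 [t12 Ht]]] := @fit R s Q
    (fun a b c ia ib ic => hc a b c (Ys a ia) (Ys b ib) (Ys c ic)).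
  exists i, t1, t2; split => //; left; split; apply/seteqP; split => x /=.
  - by move=> [Sx Qx]; split => //; apply/(Ht _ (ins x Sx)).
  - by move=> [Sx Qx]; split => //; apply/(Ht _ (ins x Sx)).
  - by move=> [Sx Qx]; split => // H; apply: Qx; apply/(Ht _ (ins x Sx)).
  - by move=> [Sx Qx]; split => // H; apply: Qx; apply/(Ht _ (ins x Sx)).
have [t1 [t2 [t12 Ht]]] := @fit R s (fun z => ~ Q z)
    (fun a b c ia ib ic => hc a b c (Ys a ia) (Ys b ib) (Ys c ic)).
exists i, t1, t2; split => //; right; split; apply/seteqP; split => x /=.
- by move=> [Sx Qx]; split => //; apply/(Ht _ (ins x Sx)).
- by move=> [Sx Qx]; split => //; apply/(Ht _ (ins x Sx)).
- move=> [Sx Qx]; split => // H.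
  exact: ((Ht _ (ins x Sx)).2 H).
- move=> [Sx Qx]; split => //.
  apply: contrapT => nQ; apply: Qx; exact/(Ht _ (ins x Sx)).
Qed.

Lemma cvx_or (R : realType) (Xi : set R) (F G : R -> R) (j : nat) (th : R) :
  interpretable_taylor_kernel Xi F G ->
  cvx Xi (fun z => surrogate_feature F G j z <= th) \/
  cvx Xi (fun z => ~ (surrogate_feature F G j z <= th)).
Proof.
move=> [conn [_ [_ [dF [_ [_ uniq]]]]]].
have iX : is_interval Xi := (connected_intervalP _).1 conn.
pose c := Num.sqrt (derive1n j G 0 / (j`!)%:R).
have SF : forall z, surrogate_feature F G j z = z ^+ j * F z * c by [].
have c0 : 0 <= c := sqrtr_ge0 _.
have [c_eq0|c_gt0] : c = 0 \/ 0 < c.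
  by move: c0; rewrite le0r => /orP[/eqP ->|->]; [left|right].
  left => a b c' _ _ _ _ _; rewrite !SF c_eq0 !mulr0 => //.
pose h0 := fun z : R => z ^+ j * F z.
have QE : forall z, (surrogate_feature F G j z <= th) = (h0 z <= th / c).
  by move=> z; rewrite SF ler_pdivlMr.
pose th' := th / c.
have dh : forall z, Xi z -> derivable h0 z 1.
  move=> z Xz.
  have -> : h0 = ((@id R) ^+ j) * F by apply/funext => y /=; rewrite exprfctE.
  apply: derivableM; last exact: dF.
  by [].
have u0 : forall p q, Xi p -> Xi q -> is_derive p 1 h0 0 -> is_derive q 1 h0 0 -> p = q.
  move=> p q Xp Xq hp hq; apply: uniq => //; apply: crit => //; exact: dF.
have [H|H] := pselect (cvx Xi (fun z => surrogate_feature F G j z <= th)).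
  by left.
right => a b c' Xa Xb Xc ab bc nQa nQc Qb.
apply: H => a' b' c'' Xa' Xb' Xc' ab' bc' Qa' Qc'.
apply: contrapT => nQb'.
move: nQa nQc Qb Qa' Qc' nQb'; rewrite !QE -/th' => nQa nQc Qb Qa' Qc' nQb'.
have nQa2 : th' < h0 a by rewrite ltNge; apply/negP.
have nQc2 : th' < h0 c' by rewrite ltNge; apply/negP.
have nQb2 : th' < h0 b' by rewrite ltNge; apply/negP.
have abs : a < b by rewrite lt_neqAle ab andbT; apply/eqP => E; subst; lra.
have bcs : b < c' by rewrite lt_neqAle bc andbT; apply/eqP => E; subst; lra.
have abs' : a' < b' by rewrite lt_neqAle ab' andbT; apply/eqP => E; subst; lra.
have bcs' : b' < c'' by rewrite lt_neqAle bc' andbT; apply/eqP => E; subst; lra.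
have [m Xm [dm hm]] := @max_in _ _ _ _ _ _ iX dh Xa' Xc' abs' bcs' (le_lt_trans Qa' nQb2) (le_lt_trans Qc' nQb2).
have [m' Xm' [dm' hm']] := @min_in _ _ _ _ _ _ iX dh Xa Xc abs bcs (le_lt_trans Qb nQa2) (le_lt_trans Qb nQc2).
have E := u0 _ _ Xm Xm' dm dm'; subst m'.
lra.
Qed.

Theorem theorem3 (R : realType) (d : nat) (X : 'I_d -> set R)
  (f g : 'I_d -> R -> R) (M : nat) :
  (forall i, interpretable_taylor_kernel (X i) (f i) (g i)) ->
  (forall (S : set ('I_d -> R)), finite_set S ->
     (forall x, S x -> forall i, X i (x i)) ->
     forall (i : 'I_d) (j : nat) (th : R), (j <= M)%N ->
       interpretable_split S
         (fun x => surrogate_feature (f i) (g i) j (x i) <= th))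
  /\
  (forall (S : set ('I_d -> R)), finite_set S ->
     (forall x, S x -> forall i, X i (x i)) ->
     forall T : cut_tree R d, cut_tree_orders_le M T ->
       interpretable_tree (cut_tree_to_split_tree f g T) S).
Proof.
move=> hK.
have P1 : forall (S : set ('I_d -> R)), finite_set S ->
     (forall x, S x -> forall i, X i (x i)) ->
     forall (i : 'I_d) (j : nat) (th : R),
       interpretable_split S
         (fun x => surrogate_feature (f i) (g i) j (x i) <= th).
  move=> S fS SX i j th.
  apply: (@split_from_convex R d S i (X i) (fun z => surrogate_feature (f i) (g i) j z <= th)) => //.
    by move=> x Sx; exact: SX.
  exact: cvx_or.
split; first by move=> S fS SX i j th _; exact: P1.
move=> S fS SX T; elim: T S fS SX => [|i j th l IHl r IHr] S fS SX //=.
move=> [_ [Ml Mr]]; split.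
- exact: P1.
- apply: IHl => //; first by apply: sub_finite_set fS => x [].
  by move=> x [Sx _]; exact: SX.
- apply: IHr => //; first by apply: sub_finite_set fS => x [].
  by move=> x [Sx _]; exact: SX.
Qed.
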